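(* Let $\widehat{X}=X+\epsilon X_0$ and $\widehat{Y}=Y+\epsilon Y_0$ with $X,X_0,Y,Y_0\in\mathbb{R}^{n\times n}$, $Ind(\widehat{X})=1$, be such that the dual group generalized inverse of $\widehat{X}$ exists. Then $\widehat{X}\leq_{D}^{\#}\widehat{Y}$ if and only if $$X\leq^{\#}Y,\qquad X^{\#}X_0+RX= X^{\#}Y_0+RY,\qquad XR+X_0X^{\#}= YR+Y_0X^{\#},$$ where $R=-X^{\#}X_0X^{\#}+(X^{\#})^2X_0(I-XX^{\#})+(I-XX^{\#})X_0(X^{\#})^2$.
   Context: A dual number is $a+\epsilon b$ with $a,b\in\mathbb{R}$, where $\epsilon\neq 0$, $\epsilon^2=0$ and $\epsilon$ commutes with reals. A dual matrix is $A+\epsilon B$ with $A,B$ real; sums and products are computed formally using $\epsilon^2=0$, and equality means equality of real and dual parts. $X^{\#}$ is the group inverse of a real square matrix $X$. For a square dual matrix $\widehat{A}$ of dual index $1$ (i.e., $\{\widehat{A}\widehat{z}\}=\{\widehat{A}^2\widehat{z}\}$ as $\widehat{z}$ ranges over dual vectors), its dual group generalized inverse $\widehat{A}^{\#}$ is the unique dual matrix $\widehat{G}$ (if it exists) with $\widehat{A}\widehat{G}\widehat{A}=\widehat{A}$, $\widehat{G}\widehat{A}\widehat{G}=\widehat{G}$, $\widehat{A}\widehat{G}=\widehat{G}\widehat{A}$. D-group order: when $\widehat{X}^{\#}$ exists, $\widehat{X}\leq_{D}^{\#}\widehat{Y}$ means $\widehat{X}^{\#}\widehat{X}=\widehat{X}^{\#}\widehat{Y}$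 and $\widehat{X}\widehat{X}^{\#}=\widehat{Y}\widehat{X}^{\#}$. Group partial order on real matrices: $X\leq^{\#}Y$ means $X^{\#}X=X^{\#}Y$ and $XX^{\#}=YX^{\#}$. *)

(* Defs.v *)
From HB Require Import structures.
From mathcomp Require Import all_boot all_algebra.
From mathcomp Require Import reals.
From Stdlib Require Import ClassicalEpsilon.
Set Implicit Arguments. Unset Strict Implicit. Unset Printing Implicit Defensive.
Import GRing.Theory.
Local Open Scope ring_scope.

Section Dual.
Variables (R : realType) (n : nat).

(* A dual matrix A + eps B is represented by the pair (A, B). *)
Definition dmat := ('M[R]_n * 'M[R]_n)%type.
Definition dvec := ('cV[R]_n * 'cV[R]_n)%type.

(* (A + eps B)(C + eps D) = AC + eps (AD + BC), using eps^2 = 0 *)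
Definition dmul (A B : dmat) : dmat := (A.1 *m B.1, A.1 *m B.2 + A.2 *m B.1).
Definition dmulv (A : dmat) (z : dvec) : dvec :=
  (A.1 *m z.1, A.1 *m z.2 + A.2 *m z.1).

(* Dual index 1: {A z} = {A^2 z} as z ranges over dual vectors. *)
Definition dual_index1 (A : dmat) : Prop :=
  (forall z : dvec, exists w : dvec, dmulv A z = dmulv (dmul A A) w) /\
  (forall z : dvec, exists w : dvec, dmulv (dmul A A) z = dmulv A w).

Definition is_dual_group_inverse (A G : dmat) : Prop :=
  [/\ dmul (dmul A G) A = A, dmul (dmul G A) G = G & dmul A G = dmul G A].

Definition dginv (A : dmat) : dmat :=
  epsilon (inhabits (0, 0)) (is_dual_group_inverse A).

Definition dgroup_le (X Y : dmat) : Prop :=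
  dmul (dginv X) X = dmul (dginv X) Y /\ dmul X (dginv X) = dmul Y (dginv X).

Definition is_group_inverse (X G : 'M[R]_n) : Prop :=
  [/\ X *m G *m X = X, G *m X *m G = G & X *m G = G *m X].

Definition ginv (X : 'M[R]_n) : 'M[R]_n :=
  epsilon (inhabits 0) (is_group_inverse X).

Definition group_le (X Y : 'M[R]_n) : Prop :=
  ginv X *m X = ginv X *m Y /\ X *m ginv X = Y *m ginv X.

Definition Rmat (X X0 : 'M[R]_n) : 'M[R]_n :=
  let Xg := ginv X in
  - (Xg *m X0 *m Xg) + (Xg *m Xg) *m X0 *m (1%:M - X *m Xg)
  + (1%:M - X *m Xg) *m X0 *m (Xg *m Xg).

End Dual.

(* Main.v *)
Require Import Defs.
From HB Require Import structures.
From mathcomp Require Import all_boot all_algebra.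
From mathcomp Require Import reals.
From Stdlib Require Import ClassicalEpsilon.
Import GRing.Theory.
Local Open Scope ring_scope.


Section L.
Variables (R : pzRingType) (n : nat) (X X0 A B : 'M[R]_n).
Hypotheses (f1 : X *m A *m X = X) (f2 : A *m X *m A = A) (fc : X *m A = A *m X).

Lemma c1 (M : 'M[R]_n) : X *m (A *m M) = A *m (X *m M).
Proof. by rewrite !mulmxA fc. Qed.
Lemma r1' : A *m (A *m X) = A.
Proof. by rewrite -fc mulmxA. Qed.
Lemma r1 (M : 'M[R]_n) : A *m (A *m (X *m M)) = A *m M.
Proof. by rewrite !mulmxA -(mulmxA A) r1'. Qed.
Lemma r2' : A *m (X *m X) = X.
Proof. by rewrite mulmxA -fc. Qed.
Lemma r2 (M : 'M[R]_n) : A *m (X *m (X *m M)) = X *m M.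
Proof. by rewrite !mulmxA -(mulmxA A) r2'. Qed.

Ltac norm := rewrite ?(mulmxDr, mulmxDl, mulmxBr, mulmxBl, mulmxN, mulNmx, mulmx1, mul1mx, opprK);
  rewrite -?mulmxA; do 6! (rewrite ?c1 ?fc ?r1 ?r1' ?r2 ?r2' -?mulmxA).

Lemma dual_part :
  A *m X *m B + (A *m X0 + B *m X) *m A = B ->
  X *m B + X0 *m A = A *m X0 + B *m X ->
  B = - (A *m X0 *m A) + (A *m A) *m X0 *m (1%:M - X *m A)
      + (1%:M - X *m A) *m X0 *m (A *m A).
Proof.
move=> h2 h3.
have h2n := h2; move: h2n; norm => h2n.
have e1 : A *m (X *m (B *m (A *m X))) = - (A *m (X0 *m A)).
  have := congr1 (fun M => A *m X *m M *m (A *m X)) h2 => /=.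
  norm => h; apply/eqP; rewrite -addr_eq0; apply/eqP.
  apply: (addIr (A *m (X *m (B *m (A *m X))))).
  by rewrite add0r -addrA.
have hA := congr1 (fun M => A *m M) h3; move: hA => /=; norm => hA.
have hAP := congr1 (fun M => A *m M *m (A *m X)) h3; move: hAP => /=; norm => hAP.
have hR := congr1 (fun M => M *m A) h3; move: hR => /=; norm => hR.
have hPR := congr1 (fun M => A *m X *m M *m A) h3; move: hPR => /=; norm => hPR.
rewrite e1 in hAP hPR.
rewrite addNr in hAP; rewrite subrr in hPR.
move/eqP: hAP; rewrite eq_sym addrC addr_eq0 => /eqP hAP.
move/eqP: hPR; rewrite addr_eq0 => /eqP hPR.
rewrite hAP in hA; move/(canRL (addrK _)): hA => hA.
have eBP : B *m (A *m X) = X *m (B *m A) + X0 *m (A *m A) - A *m (X0 *m A).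
  by rewrite hR addrAC subrr add0r.
rewrite hPR in eBP.
norm.
rewrite -{1}h2n hA eBP.
set a := A *m (X0 *m A); set b := A *m (A *m X0); set c := A *m (A *m (X0 *m (A *m X))).
set d := X0 *m (A *m A); set e := A *m (X *m (X0 *m (A *m A))).
by rewrite [a + _]addrC subrK (addrC (-a)) [d - e]addrC -!addrA.
Qed.
End L.

Lemma ginv_uniq (R : pzRingType) (n : nat) (X G H : 'M[R]_n) :
  X *m G *m X = X -> G *m X *m G = G -> X *m G = G *m X ->
  X *m H *m X = X -> H *m X *m H = H -> X *m H = H *m X -> G = H.
Proof.
move=> g1 g2 gc h1 h2 hc.
have eP : X *m H = X *m G.
  have e1 : X *m H *m (X *m G) = X *m H.
    by rewrite hc -!mulmxA gc (mulmxA X G X) g1 -hc.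
  have e2 : X *m H *m (X *m G) = X *m G by rewrite mulmxA h1.
  by rewrite -e1 e2.
by rewrite -{1}g2 -mulmxA -eP mulmxA -gc -eP hc h2.
Qed.

Theorem mainTheorem11 (R : realType) (n : nat) (X X0 Y Y0 : 'M[R]_n) :
  dual_index1 (X, X0) ->
  (exists G : dmat R n, is_dual_group_inverse (X, X0) G) ->
  dgroup_le (X, X0) (Y, Y0) <->
  [/\ group_le X Y,
      ginv X *m X0 + Rmat X X0 *m X = ginv X *m Y0 + Rmat X X0 *m Y &
      X *m Rmat X X0 + X0 *m ginv X = Y *m Rmat X X0 + Y0 *m ginv X].
Proof.
move=> _ hex.
have HD : is_dual_group_inverse (X, X0) (dginv (X, X0)) by apply: epsilon_spec.
rewrite /dgroup_le /group_le.
move: HD; case: (dginv (X, X0)) => A B [].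
rewrite /dmul /= => e1 e2 e3.
case: e1 => e1a e1b; case: e2 => e2a e2b; case: e3 => e3a e3b.
have HG : is_group_inverse X (ginv X).
  by apply: epsilon_spec; exists A; split.
case: HG => g1 g2 gc.
have gA : ginv X = A.
  by apply: (ginv_uniq _ _ _ _ _ g1 g2 gc e1a e2a e3a).
have hB : Rmat X X0 = B.
  by rewrite /Rmat gA; symmetry; apply: (dual_part _ _ _ _ _ _ e1a e2a e3a e2b e3b).
rewrite hB gA.
split.
  by case=> [[h1 h2] [h3 h4]]; split.
by case=> [[h1 h3] h2 h4]; rewrite h1 h2 h3 h4.
Qed.
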